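(* Let $m\ge 2$ and let $K\ne\Delta_{[m]}$ be a simplicial complex on $[m]$. Then for every prime $p$, $$s(\mathrm{Bier}(K))=s_p(\mathrm{Bier}(K))=f_0(K)-f_{m-2}(K)+1.$$
   Context: A simplicial complex $K$ on $[m]=\{1,\dots,m\}$ is a nonempty family of subsets of $[m]$ closed under taking subsets; $V(K)=\{i:\{i\}\in K\}$, and $f_i(K)$ is the number of faces of $K$ of cardinality $i+1$ (so $f_0(K)=|V(K)|$). $\Delta_{[m]}=2^{[m]}$. Let $[m']=\{1',\dots,m'\}$ be a disjoint copy of $[m]$, $I'=\{i':i\in I\}$. For $K\ne\Delta_{[m]}$ the Alexander dual $K^\vee$ is the complex on $[m']$ with $J'\in K^\vee$ iff $[m]\setminus J\notin K$. The Bier sphere $\mathrm{Bier}(K)$ is the complex on $[m]\sqcup[m']$ with faces $I\sqcup J'$, $I\in K$, $J'\in K^\vee$, $I\cap J=\varnothing$. For a simplicial complex $L$ with $n=|V(L)|$ vertices, the complex Buchstaber number $s(L)$ is the largest integer $r$ such that there is a map $\Lambda\colon V(L)\to\mathbb Z^{n-r}$ sending the vertex set of every face of $L$ injectively onto a subset of some basis of the lattice $\mathbb Z^{n-r}$. For a prime $p$, the mod $p$ Buchstaber number $s_p(L)$ is the largest $r$ such that there is a map $\Lambda_p\colon V(L)\to\mathbb Z_p^{n-r}$ sending the vertex set of every face injectively onto a linearly independent set over the field $\mathbb Z_p$. *)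

(* Defs.v *)
From Stdlib Require Import ClassicalEpsilon.
From mathcomp Require Import all_boot all_order all_algebra.
Set Implicit Arguments. Unset Strict Implicit. Unset Printing Implicit Defensive.
Import GRing.Theory.
Local Open Scope ring_scope.

Definition asb (P : Prop) : bool :=
  if excluded_middle_informative P then true else false.

Definition is_complex (m : nat) (K : {set {set 'I_m}}) : Prop :=
  K != set0 /\ forall A B : {set 'I_m}, B \subset A -> A \in K -> B \in K.

(* f_i(K): number of faces of cardinality i+1 *)
Definition fvec (m : nat) (K : {set {set 'I_m}}) (i : nat) : nat :=
  #|[set s in K | #|s| == i.+1]|.

(* Alexander dual, on the disjoint copy [m'] (represented again by 'I_m) *)
Definition alex_dual (m : nat) (K : {set {set 'I_m}}) : {set {set 'I_m}} :=
  [set J : {set 'I_m} | ~: J \notin K].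

(* Bier sphere on [m] ⊔ [m'] = 'I_m + 'I_m (inl i = i, inr j = j') *)
Definition Bier (m : nat) (K : {set {set 'I_m}}) : {set {set ('I_m + 'I_m)%type}} :=
  [set S : {set ('I_m + 'I_m)%type} |
    [&& [set i | inl i \in S] \in K,
        [set j | inr j \in S] \in alex_dual K &
        [disjoint [set i | inl i \in S] & [set j | inr j \in S]]]].

Definition vertices (T : finType) (L : {set {set T}}) : {set T} :=
  [set v | [set v] \in L].

(* Λ : V(L) -> Z^d sending every face injectively onto a subset of a basis
   of the lattice Z^d (a basis = the rows of an invertible integer matrix) *)
Definition Z_char_map (T : finType) (L : {set {set T}}) (d : nat) : Prop :=
  exists lam : T -> 'rV[int]_d,
    forall s, s \in L ->
      {in s &, injective lam} /\
      exists M : 'M[int]_d, M \in unitmx /\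
        forall v, v \in s -> exists i : 'I_d, lam v = row i M.

Definition Fp_char_map (p : nat) (T : finType) (L : {set {set T}}) (d : nat) : Prop :=
  exists lam : T -> 'rV['F_p]_d,
    forall s, s \in L ->
      {in s &, injective lam} /\ free [seq lam v | v <- enum s].

Definition buchstaber (T : finType) (L : {set {set T}}) : nat :=
  let n := #|vertices L| in
  (\max_(r < n.+1 | asb (Z_char_map L (n - r))) r)%N.

Definition buchstaber_p (p : nat) (T : finType) (L : {set {set T}}) : nat :=
  let n := #|vertices L| in
  (\max_(r < n.+1 | asb (Fp_char_map p L (n - r))) r)%N.

(* Main.v *)
Require Import Defs.
From Stdlib Require Import ClassicalEpsilon.
From mathcomp Require Import all_boot all_order all_algebra zify.
Set Implicit Arguments. Unset Strict Implicit. Unset Printing Implicit Defensive.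
Import GRing.Theory.
Local Open Scope ring_scope.

Definition vv (R : nzRingType) m (i : 'I_m.+2) : 'rV[R]_m.+1 :=
  if (i < m.+1)%N then \row_j ((j:nat) == i)%:R else const_mx (-1).
Definition Mk (R : nzRingType) m (k : 'I_m.+2) : 'M[R]_m.+1 :=
  \matrix_(a, b) if (a:nat) == k then -1 else ((a:nat) == b)%:R.

Lemma sum_delta (R : nzRingType) n (a : 'I_n) (f : 'I_n -> R) :
  \sum_(l : 'I_n) ((a:nat) == l)%:R * f l = f a.
Proof.
rewrite (bigD1 a) //= eqxx mul1r big1 ?addr0 // => l Hl.
have -> : ((a:nat) == l) = false by apply/negbTE; rewrite eq_sym.
by rewrite mul0r.
Qed.

Lemma Mk_invol (R : nzRingType) m (k : 'I_m.+2) : Mk R k *m Mk R k = 1%:M.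
Proof.
apply/matrixP => a b; rewrite !mxE.
case: (eqVneq (a:nat) k) => Hak.
- under eq_bigr do rewrite mxE Hak eqxx mulN1r.
  rewrite sumrN (bigD1 a) //= mxE Hak eqxx.
  have T : \sum_(i < m.+1) ((i:nat)==b)%:R = 1 :> R.
    rewrite -[RHS](sum_delta b (fun=> 1)); apply: eq_bigr => i _.
    by rewrite mulr1 eq_sym.
  rewrite (bigD1 a) //= in T.
  rewrite (eq_bigr (fun i : 'I_m.+1 => ((i:nat)==b)%:R)); last first.
    move=> l Hl; rewrite mxE -Hak.
    by have -> : ((l:nat) == a) = false by apply/negbTE.
  have -> : \sum_(i < m.+1 | i != a) ((i:nat) == b)%:R = 1 - ((a:nat)==b)%:R :> R.
    by apply: (addrI ((a == b)%:R)); rewrite T addrC subrK.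
  by rewrite addrA addNr add0r opprK.
- rewrite (eq_bigr (fun l : 'I_m.+1 => ((a:nat)==l)%:R * Mk R k l b)); last first.
    by move=> l _; rewrite mxE (negbTE Hak).
  by rewrite sum_delta mxE (negbTE Hak).
Qed.

Lemma vv_row (R : nzRingType) m (k i : 'I_m.+2) :
  i != k -> exists r : 'I_m.+1, vv R i = row r (Mk R k).
Proof.
move=> Hik; have Hik' : (i:nat) != k := Hik.
rewrite /vv; case: ltnP => Hi.
- exists (Ordinal Hi); apply/rowP => j; rewrite !mxE /=.
  by rewrite (negbTE Hik') eq_sym.
- have Hk : (k < m.+1)%N.
    have := ltn_ord k; have := ltn_ord i; move: Hik' Hi; clear; lia.
  by exists (Ordinal Hk); apply/rowP => j; rewrite !mxE /= eqxx.
Qed.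

Lemma vv_inj (R : nzRingType) m (k i j : 'I_m.+2) :
  i != k -> j != k -> vv R i = vv R j -> i = j.
Proof.
move=> Hik Hjk E; apply/eqP/negPn/negP => Hij.
have Hik' : (i:nat) != k := Hik. have Hjk' : (j:nat) != k := Hjk.
have Hij' : (i:nat) != j := Hij.
move: E; rewrite /vv; case: (ltnP i m.+1) => Hi; case: (ltnP j m.+1) => Hj.
- move=> E; have := congr1 (fun v : 'rV_m.+1 => v 0 (Ordinal Hi)) E.
  rewrite !mxE /= eqxx (negbTE Hij') => /eqP; by rewrite oner_eq0.
- have Hk : (k < m.+1)%N.
    have := ltn_ord k; have := ltn_ord j; move: Hjk' Hj; clear; lia.
  move=> E; have := congr1 (fun v : 'rV_m.+1 => v 0 (Ordinal Hk)) E.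
  rewrite !mxE /= eq_sym (negbTE Hik') => /eqP; by rewrite eq_sym oppr_eq0 oner_eq0.
- have Hk : (k < m.+1)%N.
    have := ltn_ord k; have := ltn_ord i; move: Hik' Hi; clear; lia.
  move=> E; have := congr1 (fun v : 'rV_m.+1 => v 0 (Ordinal Hk)) E.
  rewrite !mxE /= eq_sym (negbTE Hjk') => /eqP; by rewrite oppr_eq0 oner_eq0.
- have := ltn_ord i; have := ltn_ord j; move: Hij' Hi Hj; clear; lia.
Qed.

Lemma rows_free (F : fieldType) d (M : 'M[F]_d) (X : seq 'rV[F]_d) :
  M \in unitmx -> uniq X -> (forall x, x \in X -> exists i, x = row i M) -> free X.
Proof.
move=> uM uX HX.
case: (@freeP _ _ _ (in_tuple X)) => // nf; exfalso; apply: nf => c Hc i.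
have Hg : forall j : 'I_(size X), exists r : 'I_d, X`_j == row r M.
  move=> j; have [r Hr] := HX _ (mem_nth 0 (ltn_ord j)); exists r; exact/eqP.
pose g j := xchoose (Hg j).
have Hgj : forall j : 'I_(size X), X`_j = row (g j) M := fun j : 'I_(size X) => eqP (xchooseP (Hg j)).
have ginj : injective g.
  move=> j1 j2 E; apply/val_inj/eqP.
  by rewrite -(nth_uniq 0 (ltn_ord j1) (ltn_ord j2) uX) !Hgj E.
pose u := \sum_(j < size X) c j *: delta_mx (0:'I_1) (g j).
have uM0 : u *m M = 0.
  rewrite mulmx_suml -[RHS]Hc; apply: eq_bigr => j _.
  by rewrite -scalemxAl -rowE -Hgj.
have u0 : u = 0 by rewrite -(mulmxK uM u) uM0 mul0mx.
have := congr1 (fun v : 'rV_d => v 0 (g i)) u0; rewrite /u summxE mxE.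
rewrite (bigD1 i) //= big1 ?addr0.
  by rewrite !mxE !eqxx mulr1.
move=> j Hj; rewrite !mxE (inj_eq ginj) eq_sym (negbTE Hj) andbF mulr0.
by []. Qed.

Lemma asbT (Q : Prop) : asb Q <-> Q.
Proof. by rewrite /asb; case: excluded_middle_informative. Qed.

Section Comb.
Variable n : nat.
Implicit Types K : {set {set 'I_n}}.

Lemma setT_notin K : is_complex K -> K != [set: {set 'I_n}] -> setT \notin K.
Proof.
move=> [_ cl] HT; apply/negP => HTK; move/eqP: HT; apply; apply/setP => A.
by rewrite inE; exact: cl _ _ (subsetT A) HTK.
Qed.

Lemma set0_in K : is_complex K -> set0 \in K.
Proof. by move=> [/set0Pn [A HA] cl]; exact: cl _ _ (sub0set A) HA. Qed.

Lemma bier_closed K (S T : {set 'I_n + 'I_n}) : is_complex K -> S \in Bier K -> T \subset S -> T \in Bier K.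
Proof.
move=> [_ cl] HS HTS; move: HS; rewrite !inE => /and3P[HI HJ HD].
have sI : [set i | inl i \in T] \subset [set i | inl i \in S].
  by apply/subsetP => i; rewrite !inE; apply: (subsetP HTS).
have sJ : [set i | inr i \in T] \subset [set i | inr i \in S].
  by apply/subsetP => i; rewrite !inE; apply: (subsetP HTS).
apply/and3P; split.
- exact: cl _ _ sI HI.
- apply: contra HJ => H; apply: cl _ _ _ H; by rewrite setCS.
- exact: disjointW sI sJ HD.
Qed.

Lemma bier_missing K S : is_complex K -> S \in Bier K ->
  exists k, (inl k \notin S) && (inr k \notin S).
Proof.
move=> [_ cl] HS; move: HS; rewrite !inE => /and3P[HI HJ HD].
case: (pickP (fun k => (inl k \notin S) && (inr k \notin S))) => [k Hk|H].
  by exists k.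
exfalso; move/negP: HJ; apply; apply: cl _ _ _ HI.
apply/subsetP => k; rewrite !inE => Hk.
by move: (H k); rewrite Hk andbT => /negbFE.
Qed.

Lemma bier_disj K S k : S \in Bier K -> inl k \in S -> inr k \in S -> False.
Proof.
rewrite !inE => /and3P[_ _ HD] Hl Hr.
by have := disjointFr HD (_ : k \in [set i | inl i \in S]); rewrite !inE Hr => /(_ Hl).
Qed.


Lemma vert_eq K : is_complex K -> K != [set: {set 'I_n}] ->
  vertices (Bier K) = inl @: [set i | [set i] \in K] :|: inr @: [set j | ~: [set j] \notin K].
Proof.
move=> HK HT; have T0 := setT_notin HK HT; have E0 := set0_in HK.
apply/setP => x; rewrite !inE; case: x => i.
- have -> : [set i0 | inl i0 \in [set (inl i : 'I_n + 'I_n)]] = [set i].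
    by apply/setP => j; rewrite !inE.
  have -> : [set i0 | inr i0 \in [set (inl i : 'I_n + 'I_n)]] = set0.
    by apply/setP => j; rewrite !inE.
  rewrite mem_imset; last by move=> ? ? [].
  have -> : (inl i \in inr @: [set j | ~: [set j] \notin K]) = false.
    by apply/negbTE/imsetP => -[].
  by rewrite inE setC0 T0 -setI_eq0 setI0 eqxx !andbT orbF.
- have -> : [set i0 | inl i0 \in [set (inr i : 'I_n + 'I_n)]] = set0.
    by apply/setP => j; rewrite !inE.
  have -> : [set i0 | inr i0 \in [set (inr i : 'I_n + 'I_n)]] = [set i].
    by apply/setP => j; rewrite !inE.
  rewrite mem_imset; last by move=> ? ? [].
  have -> : (inr i \in inl @: [set j | [set j] \in K]) = false.
    by apply/negbTE/imsetP => -[].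
  by rewrite !inE E0 -setI_eq0 set0I eqxx /= andbT.
Qed.


Lemma vert_count K : is_complex K -> K != [set: {set 'I_n}] -> (1 < n)%N ->
  (#|vertices (Bier K)| + fvec K (n - 2) = fvec K 0 + n)%N.
Proof.
move=> HK HT n0.
set A1 := [set i | [set i] \in K]; set A2 := [set j | ~: [set j] \notin K].
have inl_inj : injective (@inl 'I_n 'I_n) by move=> ? ? [].
have inr_inj : injective (@inr 'I_n 'I_n) by move=> ? ? [].
have cV : #|vertices (Bier K)| = (#|A1| + #|A2|)%N.
  rewrite vert_eq // -(card_imset _ inl_inj) -(card_imset _ inr_inj) -cardsUI.
  have -> : inl @: A1 :&: inr @: A2 = set0.
    apply/setP => x; rewrite !inE; apply/negbTE/andP => -[/imsetP[a _ ->]].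
    by case/imsetP.
  by rewrite cards0 addn0.
have c0 : fvec K 0 = #|A1|.
  rewrite /fvec; suff -> : [set s in K | #|s| == 1%N] = set1 @: A1.
    by rewrite card_imset //; exact: set1_inj.
  apply/setP => s; rewrite !inE; apply/andP/imsetP.
  - by move=> [Hs /cards1P [x Ex]]; exists x => //; rewrite inE -Ex.
  - by move=> [x Hx ->]; rewrite inE in Hx; rewrite Hx cards1.
have c1 : fvec K (n - 2) = #|~: A2|.
  have inj : injective (fun j : 'I_n => ~: [set j]).
    by move=> a b /setC_inj /set1_inj.
  rewrite /fvec; suff -> : [set s in K | #|s| == (n - 2).+1] = (fun j : 'I_n => ~: [set j]) @: ~: A2.
    by rewrite card_imset.
  apply/setP => s; rewrite !inE; apply/andP/imsetP.
  - move=> [Hs Hc]; have : #|~: s| == 1%N.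
      have := cardsC s; rewrite card_ord (eqP Hc); move: (#|~: s|) => c; move: n0; clear; lia.
    move=> /cards1P [x Ex]; exists x; first by rewrite !inE negbK -Ex setCK.
    by rewrite -Ex setCK.
  - move=> [x Hx ->]; rewrite !inE negbK in Hx; rewrite Hx /=.
    have := cardsC [set x]; rewrite cards1 card_ord => H; split => //; apply/eqP; move: H; move: (#|[set~ x]|) => c; move: n0; clear; lia.
rewrite cV c0 c1 -addnA cardsC card_ord //.
Qed.


Lemma big_face K : is_complex K -> K != [set: {set 'I_n}] ->
  exists2 S, S \in Bier K & (n <= #|S|.+1)%N.
Proof.
move=> HK HT; have T0 := setT_notin HK HT; have E0 := set0_in HK.
have [_ cl] := HK.
pose P := fun t => [set i : 'I_n | ((i:nat) < t)%N] \in K.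
have P0 : exists t, P t.
  exists 0%N; apply: cl _ _ _ E0; apply/subsetP => i; by rewrite inE ltn0.
have Pb : forall t, P t -> (t <= n.-1)%N.
  move=> t Pt; rewrite leqNgt; apply/negP => Ht; move/negP: T0; apply.
  suff <- : [set i : 'I_n | ((i:nat) < t)%N] = setT by [].
  apply/setP => i; rewrite !inE; have := ltn_ord i; move: Ht; clear; lia.
case: (ex_maxnP P0 Pb) => t Pt tmax.
have nPt : ~~ P t.+1 by apply/negP => /tmax; lia.
have Ht : (t < n)%N.
  rewrite ltnNge; apply/negP => Ht; move/negP: T0; apply.
  suff <- : [set i : 'I_n | ((i:nat) < t)%N] = setT by [].
  apply/setP => i; rewrite !inE; have := ltn_ord i; move: Ht; clear; lia.
pose A := [set i : 'I_n | ((i:nat) < t)%N]; pose B := [set j : 'I_n | (t < j)%N].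
exists (inl @: A :|: inr @: B).
  have eA : [set i | inl i \in inl @: A :|: inr @: B] = A.
    apply/setP => i; rewrite !inE mem_imset; last by move=> ? ? [].
    have -> : (inl i \in inr @: B) = false by apply/negbTE/imsetP => -[].
    by rewrite orbF inE.
  have eB : [set i | inr i \in inl @: A :|: inr @: B] = B.
    apply/setP => i; rewrite !inE mem_imset; last by move=> ? ? [].
    have -> : (inr i \in inl @: A) = false by apply/negbTE/imsetP => -[].
    by rewrite inE.
  rewrite inE eA eB; apply/and3P; split; first exact: Pt.
    rewrite inE; apply: contra nPt => H; rewrite /P.
    suff <- : ~: B = [set i : 'I_n | ((i:nat) < t.+1)%N] by [].
    by apply/setP => i; rewrite !inE; lia.
  rewrite -setI_eq0; apply/eqP/setP => i; rewrite !inE.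
  by apply/negbTE/negP => /andP[]; lia.
have inl_inj : injective (@inl 'I_n 'I_n) by move=> ? ? [].
have inr_inj : injective (@inr 'I_n 'I_n) by move=> ? ? [].
rewrite -[X in (_ <= X.+1)%N]addn0.
have <- : #|inl @: A :&: inr @: B| = 0%N.
  apply/eqP; rewrite cards_eq0; apply/eqP/setP => x; rewrite !inE.
  by apply/negbTE/andP => -[/imsetP[a _ ->]]; case/imsetP.
rewrite cardsUI !card_imset //.
have sT : [set: 'I_n] \subset A :|: B :|: [set Ordinal Ht].
  apply/subsetP => i _; rewrite !inE.
  case: (ltngtP i t) => Hi; rewrite ?Hi ?orbT //=.
  by apply/eqP/val_inj.
have := subset_leq_card sT; rewrite cardsT card_ord => H.
apply: (leq_trans H); apply: (leq_trans (leq_card_setU _ _).1).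
rewrite cards1 addn1 ltnS; exact: (leq_card_setU A B).1.
Qed.

End Comb.

Lemma Zchar_lb (T : finType) (L : {set {set T}}) d S :
  S \in L -> Z_char_map L d -> (#|S| <= d)%N.
Proof.
move=> HS [lam H]; case: (H S HS) => inj [M [_ HM]].
have U : uniq [seq lam v | v <- enum S].
  rewrite map_inj_in_uniq ?enum_uniq // => x y; rewrite !mem_enum; exact: inj.
rewrite cardE -(size_map lam); apply: (@leq_trans (size [seq row i M | i <- enum 'I_d])); last by rewrite size_map size_enum_ord.
apply: (uniq_leq_size U) => y /mapP [v]; rewrite mem_enum => Hv ->.
by case: (HM v Hv) => i ->; apply/mapP; exists i; rewrite ?mem_enum.
Qed.

Lemma Fpchar_lb p (T : finType) (L : {set {set T}}) d S :
  S \in L -> Fp_char_map p L d -> (#|S| <= d)%N.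
Proof.
move=> HS [lam H]; case: (H S HS) => inj fr.
rewrite cardE -(size_map lam) -(eqP fr).
apply: leq_trans (dimvS (subvf _)) _.
by rewrite dimvf dim_matrix mul1r.
Qed.

Lemma max_eq n a (P : nat -> bool) : (a <= n)%N -> P a ->
  (forall d, P d -> (a <= d)%N) -> \max_(r < n.+1 | P (n - r)%N) r = (n - a)%N.
Proof.
move=> an Pa HP; apply/eqP; rewrite eqn_leq; apply/andP; split.
- apply/bigmax_leqP => r Hr /=; have := HP _ Hr; have := ltn_ord r; move: an; clear; lia.
- have Hr : (n - a < n.+1)%N by lia.
  have := @leq_bigmax_cond _ (fun r : 'I_n.+1 => P (n - r)%N) (fun r => nat_of_ord r) (Ordinal Hr).
  by rewrite /= subKn //; apply.
Qed.

Definition idx m (x : 'I_m + 'I_m) : 'I_m := match x with inl i => i | inr i => i end.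
Definition lam (R : nzRingType) m (x : 'I_m.+2 + 'I_m.+2) : 'rV[R]_m.+1 := vv R (idx x).

Lemma lam_face (R : nzRingType) m (K : {set {set 'I_m.+2}}) S :
  is_complex K -> S \in Bier K -> exists k,
  {in S &, injective (@lam R m)} /\ forall v, v \in S -> exists r, lam R v = row r (Mk R k).
Proof.
move=> HK HS; case: (bier_missing HK HS) => k /andP[Hl Hr].
have Hidx : forall v, v \in S -> idx v != k.
  move=> [] i Hi /=; apply/negP => /eqP E; subst i.
  - by rewrite Hi in Hl.
  - by rewrite Hi in Hr.
exists k; split.
- move=> x y Hx Hy E; have := vv_inj (Hidx _ Hx) (Hidx _ Hy) E.
  case: x y Hx Hy {E} => [i|i] [j|j] /= Hx Hy Eij; rewrite ?Eij //; rewrite Eij in Hx.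
  + by case: (bier_disj HS Hx Hy).
  + by case: (bier_disj HS Hy Hx).
- by move=> v Hv; exact: vv_row (Hidx _ Hv).
Qed.

Unset Implicit Arguments.

Theorem mainTheorem12 (m : nat) (K : {set {set 'I_m}}) :
  (2 <= m)%N -> is_complex K -> K != [set: {set 'I_m}] ->
  (buchstaber (Bier K))%:Z = (fvec K 0)%:Z - (fvec K (m - 2))%:Z + 1 /\
  forall p : nat, prime p ->
    (buchstaber_p p (Bier K))%:Z = (fvec K 0)%:Z - (fvec K (m - 2))%:Z + 1.
Proof.
case: m K => [|[|m]] K // _ HK HT.
have Zup : Z_char_map (Bier K) m.+1.
  exists (@lam _ m) => s Hs; case: (lam_face int HK Hs) => k [inj rows]; split => //.
  exists (Mk int k); split => //; by case: (mulmx1_unit (Mk_invol int k)).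
have Fup : forall p, Fp_char_map p (Bier K) m.+1.
  move=> p; exists (@lam 'F_p m) => s Hs; case: (lam_face 'F_p HK Hs) => k [inj rows].
  split => //; apply: (rows_free (M := Mk 'F_p k)).
  - by case: (mulmx1_unit (Mk_invol 'F_p k)).
  - by rewrite map_inj_in_uniq ?enum_uniq // => x y; rewrite !mem_enum; exact: inj.
  - by move=> x /mapP [v]; rewrite mem_enum => Hv ->; exact: rows.
have [S0 HS0 cS0] := big_face HK HT.
have cS0' : (m.+1 <= #|S0|)%N by [].
have Zlb : forall d, Z_char_map (Bier K) d -> (m.+1 <= d)%N.
  by move=> d H; apply: leq_trans cS0' (Zchar_lb HS0 H).
have Flb : forall p d, Fp_char_map p (Bier K) d -> (m.+1 <= d)%N.
  by move=> p d H; apply: leq_trans cS0' (Fpchar_lb HS0 H).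
have nV : (m.+1 <= #|vertices (Bier K)|)%N.
  apply: leq_trans cS0' (subset_leq_card _); apply/subsetP => x Hx.
  by rewrite inE; apply: bier_closed HK HS0 _; rewrite sub1set.
have cnt := vert_count HK HT (erefl : (1 < m.+2)%N).
split.
- rewrite /buchstaber /=.
  rewrite (@max_eq _ m.+1 (fun d => asb (Z_char_map (Bier K) d))) //.
  + move: cnt nV; move: (#|vertices (Bier K)|) (fvec K 0) (fvec K (m.+2 - 2)) => a b c.
    clear; lia.
  + by apply/asbT.
  + by move=> d /asbT; apply: Zlb.
- move=> p _; rewrite /buchstaber_p /=.
  rewrite (@max_eq _ m.+1 (fun d => asb (Fp_char_map p (Bier K) d))) //.
  + move: cnt nV; move: (#|vertices (Bier K)|) (fvec K 0) (fvec K (m.+2 - 2)) => a b c.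
    clear; lia.
  + by apply/asbT.
  + by move=> d /asbT; apply: Flb.
Qed.
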